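(* Let $K$ be a $\mathbb{Z}/2\mathbb{Z}$-pure global knot diagram in $T^2\times\mathbb{R}$ with respect to $v$. Then $pr(K)$ contains no triangle, i.e. there are no three crossings $q_1,q_2,q_3$ and three arcs of $pr(K)$ joining them pairwise whose union is a null-homotopic loop in $T^2$. In particular no Reidemeister move of type III can be performed on $K$. (This follows from the relation $[K^+_{q_3}]=\pm[K^+_{q_1}]\pm[K^+_{q_2}]$ modulo $[K]$ for such a triangle, which forbids all three classes from being nonzero in $\mathbb{Z}/2\mathbb{Z}$.)
   Context: $T^2=\mathbb{R}^2/\mathbb{Z}^2$ with fixed generators $\alpha,\beta$ of $H_1(T^2;\mathbb{Z})$; $v$ is the constant unit vector field on $T^2$ tangent to the fibres of a linear submersion $f:T^2\to S^1$ whose fibres represent $\beta$; $pr:T^2\times\mathbb{R}\to T^2$ is the projection. A knot diagram is a smooth oriented knot $K\subset T^2\times\mathbb{R}$ such that $pr|_K$ is an immersion whose only multiple points are transverse double points, called crossings. $K$ is global (with respect to $v$) if $pr(K)$ is everywhere transverse to $v$; it is oriented so that (tangent vector of $pr(K)$, $v$) is a positively oriented basis of $T^2$. For a crossing $p$, smoothing $pr(K)$ at $p$ respecting orientations yields two oriented loops $K_p^+,K_p^-$ with $[K_p^+]+[K_p^-]=[K]$ in $H_1(T^2;\mathbb{Z})$. A global knot diagram $K$ is $\mathbb{Z}/2\mathbb{Z}$-pure if (1) $H_1(T^2;\mathbb{Z})/\langle[K]\rangle\cong\mathbb{Z}$, and (2) for every crossing $p$ the class of $K_p^+$ (equivalently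 of $K_p^-$) is nonzero in $G=(H_1(T^2;\mathbb{Z})/\langle[K]\rangle)\otimes\mathbb{Z}/2\mathbb{Z}\cong\mathbb{Z}/2\mathbb{Z}$. *)

(* Defs.v *)
From Stdlib Require Import Reals ZArith.
From Coquelicot Require Import Coquelicot.
Open Scope R_scope.

(* T^2 = R^2/Z^2.  A curve on T^2 is represented by a lift
   c = (cx, cy) : R -> R^2 to the universal cover, with parameter circle
   R/Z, and c(t+1) = c(t) + (a,b) where (a,b) in Z^2 = H_1(T^2;Z) is [K]
   in the basis alpha = e1, beta = e2. *)

Definition Zint (x : R) : Prop := exists k : Z, x = IZR k.

Definition same_in_torus (x1 y1 x2 y2 : R) : Prop :=
  Zint (x1 - x2) /\ Zint (y1 - y2).

Definition same_param (s t : R) : Prop := Zint (s - t).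

Definition smooth (f : R -> R) : Prop := forall (n : nat) (x : R), ex_derive_n f n x.

(* K is a knot diagram in T^2 x R: the knot is t |-> (c(t) mod Z^2, z(t)),
   t in R/Z; (a,b) = [K]. *)
Definition knot_diagram (cx cy z : R -> R) (a b : Z) : Prop :=
  smooth cx /\ smooth cy /\ smooth z /\
  (forall t, cx (t + 1) = cx t + IZR a /\ cy (t + 1) = cy t + IZR b /\ z (t + 1) = z t) /\
  (forall s t, same_in_torus (cx s) (cy s) (cx t) (cy t) -> z s = z t -> same_param s t) /\
  (forall t, Derive cx t <> 0 \/ Derive cy t <> 0) /\
  (forall s t, ~ same_param s t -> same_in_torus (cx s) (cy s) (cx t) (cy t) ->
     Derive cx s * Derive cy t - Derive cy s * Derive cx t <> 0) /\
  (forall r s t, ~ same_param r s -> ~ same_param s t -> ~ same_param r t ->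
     same_in_torus (cx r) (cy r) (cx s) (cy s) ->
     same_in_torus (cx s) (cy s) (cx t) (cy t) -> False).

(* v = (0,1): constant unit vector field tangent to the fibres of the linear
   submersion f(x,y) = x, whose fibres represent beta = e2.
   Global: pr(K) transverse to v, oriented so that (c', v) is a positive
   basis, i.e. det(c', v) = cx' > 0. *)
Definition global (cx cy : R -> R) : Prop := forall t, Derive cx t > 0.

(* H_1(T^2;Z)/<[K]> is isomorphic to Z: there is a surjective group
   homomorphism Z^2 -> Z whose kernel is exactly <(a,b)>. *)
Definition quotient_iso_Z (a b : Z) : Prop :=
  exists phi : Z -> Z -> Z,
    (forall x1 y1 x2 y2, phi (x1 + x2)%Z (y1 + y2)%Z = (phi x1 y1 + phi x2 y2)%Z) /\
    (forall n : Z, exists x y, phi x y = n) /\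
    (forall x y, phi x y = 0%Z <-> exists k : Z, x = (k * a)%Z /\ y = (k * b)%Z).

(* The class of (dx,dy) in G = (Z^2/<(a,b)>) (x) Z/2 = Z^2/(<(a,b)> + 2Z^2)
   is nonzero. *)
Definition nonzero_in_G (a b dx dy : Z) : Prop :=
  ~ exists k u w : Z, dx = (k * a + 2 * u)%Z /\ dy = (k * b + 2 * w)%Z.

(* Z/2-pure.  A crossing p is a pair of parameters 0 <= s < t < 1 with
   c(s) = c(t) in T^2; the smoothing loop K_p^+ follows K from s to t, and
   its homology class is c(t) - c(s) in Z^2. *)
Definition Z2_pure (cx cy : R -> R) (a b : Z) : Prop :=
  quotient_iso_Z a b /\
  forall (s t : R) (dx dy : Z), 0 <= s -> s < t -> t < 1 ->
    cx t - cx s = IZR dx -> cy t - cy s = IZR dy ->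
    nonzero_in_G a b dx dy.

(* A triangle in pr(K): three pairwise distinct crossings q1,q2,q3 and three
   arcs of pr(K), arc j being the image of the parameter interval between
   u_j and w_j (0 < |w_j - u_j| < 1), traversed from u_j to w_j; arc 1 joins
   q1 to q2, arc 2 joins q2 to q3, arc 3 joins q3 to q1.  At each crossing the
   loop passes from one branch to the other (the two parameters are distinct
   points of R/Z with the same image in T^2).  The union loop is
   null-homotopic in T^2 iff its lift to R^2 closes up, i.e. the sum of the
   lifted displacements of the three arcs is zero. *)
Definition arc (u w : R) : Prop := u <> w /\ Rabs (w - u) < 1.

Definition has_triangle (cx cy : R -> R) : Prop :=
  exists u1 w1 u2 w2 u3 w3 : R,
    arc u1 w1 /\ arc u2 w2 /\ arc u3 w3 /\
    ~ same_param w1 u2 /\ same_in_torus (cx w1) (cy w1) (cx u2) (cy u2) /\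
    ~ same_param w2 u3 /\ same_in_torus (cx w2) (cy w2) (cx u3) (cy u3) /\
    ~ same_param w3 u1 /\ same_in_torus (cx w3) (cy w3) (cx u1) (cy u1) /\
    ~ same_in_torus (cx u1) (cy u1) (cx u2) (cy u2) /\
    ~ same_in_torus (cx u2) (cy u2) (cx u3) (cy u3) /\
    ~ same_in_torus (cx u1) (cy u1) (cx u3) (cy u3) /\
    (cx w1 - cx u1) + (cx w2 - cx u2) + (cx w3 - cx u3) = 0 /\
    (cy w1 - cy u1) + (cy w2 - cy u2) + (cy w3 - cy u3) = 0.

(* Main.v *)
Require Import Defs.
From Stdlib Require Import Reals ZArith Lia Lra.
From Coquelicot Require Import Coquelicot.
Open Scope R_scope.

Lemma period_Z (f : R -> R) (c : R) :
  (forall t, f (t + 1) = f t + c) ->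
  forall n : Z, forall t, f (t + IZR n) = f t + IZR n * c.
Proof.
  intros H n. induction n using Z.peano_ind; intros t.
  - rewrite Rplus_0_r. ring.
  - rewrite succ_IZR.
    replace (t + (IZR n + 1)) with ((t + IZR n) + 1) by ring.
    rewrite H, IHn. ring.
  - unfold Z.pred; rewrite plus_IZR.
    pose proof (H (t + (IZR n + IZR (-1)))) as H1.
    replace (t + (IZR n + IZR (-1)) + 1) with (t + IZR n) by ring.
    replace (t + (IZR n + IZR (-1)) + 1) with (t + IZR n) in H1 by ring.
    rewrite IHn in H1. lra.
Qed.

Section Phi.
Variable phi : Z -> Z -> Z.
Hypothesis Hadd : forall x1 y1 x2 y2, phi (x1 + x2)%Z (y1 + y2)%Z = (phi x1 y1 + phi x2 y2)%Z.

Lemma phi00 : phi 0 0 = 0%Z.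
Proof. pose proof (Hadd 0 0 0 0) as H. simpl in H. lia. Qed.

Lemma phi_opp x y : phi (- x)%Z (- y)%Z = (- phi x y)%Z.
Proof.
  pose proof (Hadd x y (-x) (-y)) as H.
  replace (x + - x)%Z with 0%Z in H by lia.
  replace (y + - y)%Z with 0%Z in H by lia.
  rewrite phi00 in H. lia.
Qed.
End Phi.

Lemma nonzero_odd a b phi dx dy :
  (forall x1 y1 x2 y2, phi (x1 + x2)%Z (y1 + y2)%Z = (phi x1 y1 + phi x2 y2)%Z) ->
  (forall n : Z, exists x y, phi x y = n) ->
  (forall x y, phi x y = 0%Z <-> exists k : Z, x = (k * a)%Z /\ y = (k * b)%Z) ->
  nonzero_in_G a b dx dy -> Z.odd (phi dx dy) = true.
Proof.
  intros Hadd Hsur Hker Hnz.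
  destruct (Z.Even_or_Odd (phi dx dy)) as [[m Hm]|Ho].
  - exfalso. apply Hnz.
    destruct (Hsur m) as [x [y Hxy]].
    assert (H0 : phi (dx - 2 * x)%Z (dy - 2 * y)%Z = 0%Z).
    { pose proof (Hadd (dx - 2 * x)%Z (dy - 2*y)%Z (2 * x)%Z (2 * y)%Z) as H1.
      pose proof (Hadd x y x y) as H2.
      replace (x + x)%Z with (2 * x)%Z in H2 by lia.
      replace (y + y)%Z with (2 * y)%Z in H2 by lia.
      replace (dx - 2 * x + 2 * x)%Z with dx in H1 by lia.
      replace (dy - 2 * y + 2 * y)%Z with dy in H1 by lia.
      lia. }
    apply Hker in H0. destruct H0 as [k [Hk1 Hk2]].
    exists k, x, y. lia.
  - apply Z.odd_spec. exact Ho.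
Qed.

Lemma Int_bounds r : 0 <= r - IZR (Int_part r) < 1.
Proof. destruct (base_Int_part r). lra. Qed.

Lemma crossing_odd cx cy a b phi p q dx dy :
  (forall t, cx (t + 1) = cx t + IZR a) ->
  (forall t, cy (t + 1) = cy t + IZR b) ->
  (forall x1 y1 x2 y2, phi (x1 + x2)%Z (y1 + y2)%Z = (phi x1 y1 + phi x2 y2)%Z) ->
  (forall n : Z, exists x y, phi x y = n) ->
  (forall x y, phi x y = 0%Z <-> exists k : Z, x = (k * a)%Z /\ y = (k * b)%Z) ->
  (forall (s t : R) (dx dy : Z), 0 <= s -> s < t -> t < 1 ->
    cx t - cx s = IZR dx -> cy t - cy s = IZR dy ->
    nonzero_in_G a b dx dy) ->
  ~ same_param p q ->
  cx p - cx q = IZR dx -> cy p - cy q = IZR dy ->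
  Z.odd (phi dx dy) = true.
Proof.
  intros Hpx Hpy Hadd Hsur Hker Hpure Hsp Hdx Hdy.
  set (np := Int_part p). set (nq := Int_part q).
  pose proof (Int_bounds p) as Bp. pose proof (Int_bounds q) as Bq.
  fold np in Bp. fold nq in Bq.
  pose proof (period_Z cx (IZR a) Hpx (- np) p) as Xp.
  pose proof (period_Z cx (IZR a) Hpx (- nq) q) as Xq.
  pose proof (period_Z cy (IZR b) Hpy (- np) p) as Yp.
  pose proof (period_Z cy (IZR b) Hpy (- nq) q) as Yq.
  rewrite opp_IZR in Xp, Xq, Yp, Yq.
  replace (p + - IZR np) with (p - IZR np) in Xp, Yp by ring.
  replace (q + - IZR nq) with (q - IZR nq) in Xq, Yq by ring.
  assert (Hm : forall m, phi (m * a)%Z (m * b)%Z = 0%Z).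
  { intro m. apply Hker. exists m. split; reflexivity. }
  set (m := (np - nq)%Z).
  assert (Hshift : forall x y, phi (x + m * a)%Z (y + m * b)%Z = phi x y).
  { intros x y. rewrite Hadd, Hm. lia. }
  destruct (Rtotal_order (p - IZR np) (q - IZR nq)) as [Hlt|[Heq|Hgt]].
  -
    assert (H := Hpure (p - IZR np) (q - IZR nq) (- dx + m * a)%Z (- dy + m * b)%Z
                  ltac:(lra) Hlt ltac:(lra)).
    assert (Hn : nonzero_in_G a b (- dx + m * a)%Z (- dy + m * b)%Z).
    { apply H.
      - rewrite Xp, Xq. unfold m. rewrite plus_IZR, opp_IZR, mult_IZR, minus_IZR. lra.
      - rewrite Yp, Yq. unfold m. rewrite plus_IZR, opp_IZR, mult_IZR, minus_IZR. lra. }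
    apply (nonzero_odd a b phi) in Hn; auto.
    rewrite Hshift, (phi_opp phi Hadd), Z.odd_opp in Hn. exact Hn.
  - exfalso. apply Hsp. exists (np - nq)%Z. rewrite minus_IZR. lra.
  - assert (H := Hpure (q - IZR nq) (p - IZR np) (dx - m * a)%Z (dy - m * b)%Z
                  ltac:(lra) Hgt ltac:(lra)).
    assert (Hn : nonzero_in_G a b (dx - m * a)%Z (dy - m * b)%Z).
    { apply H.
      - rewrite Xp, Xq. unfold m. rewrite minus_IZR, mult_IZR, minus_IZR. lra.
      - rewrite Yp, Yq. unfold m. rewrite minus_IZR, mult_IZR, minus_IZR. lra. }
    apply (nonzero_odd a b phi) in Hn; auto.
    replace (dx - m * a)%Z with (dx + (- m) * a)%Z in Hn by lia.
    replace (dy - m * b)%Z with (dy + (- m) * b)%Z in Hn by lia.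
    rewrite Hadd, Hm, Z.add_0_r in Hn. exact Hn.
Qed.

Theorem mainTheorem5 (cx cy z : R -> R) (a b : Z) :
  knot_diagram cx cy z a b -> global cx cy -> Z2_pure cx cy a b ->
  ~ has_triangle cx cy.
Proof.
  intros Hk _ [[phi [Hadd [Hsur Hker]]] Hpure] Htri.
  destruct Hk as [_ [_ [_ [Hper _]]]].
  assert (Hpx : forall t, cx (t + 1) = cx t + IZR a) by (intro t; apply Hper).
  assert (Hpy : forall t, cy (t + 1) = cy t + IZR b) by (intro t; apply Hper).
  destruct Htri as [u1 [w1 [u2 [w2 [u3 [w3 [_ [_ [_ [S1 [C1 [S2 [C2 [S3 [C3 [_ [_ [_ [Sx Sy]]]]]]]]]]]]]]]]]]].
  destruct C1 as [[k1x E1x] [k1y E1y]].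
  destruct C2 as [[k2x E2x] [k2y E2y]].
  destruct C3 as [[k3x E3x] [k3y E3y]].
  pose proof (crossing_odd cx cy a b phi _ _ _ _ Hpx Hpy Hadd Hsur Hker Hpure S1 E1x E1y) as O1.
  pose proof (crossing_odd cx cy a b phi _ _ _ _ Hpx Hpy Hadd Hsur Hker Hpure S2 E2x E2y) as O2.
  pose proof (crossing_odd cx cy a b phi _ _ _ _ Hpx Hpy Hadd Hsur Hker Hpure S3 E3x E3y) as O3.
  assert (Zx : (k1x + k2x + k3x)%Z = 0%Z).
  { apply eq_IZR. rewrite !plus_IZR. lra. }
  assert (Zy : (k1y + k2y + k3y)%Z = 0%Z).
  { apply eq_IZR. rewrite !plus_IZR. lra. }
  pose proof (phi00 phi Hadd) as P0.
  assert (P1 : phi (k1x + k2x + k3x)%Z (k1y + k2y + k3y)%Z = 0%Z) by (rewrite Zx, Zy; exact P0).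
  rewrite !Hadd in P1.
  assert (Hodd : Z.odd (phi k1x k1y + phi k2x k2y + phi k3x k3y) = true).
  { rewrite !Z.odd_add, O1, O2, O3. reflexivity. }
  rewrite P1 in Hodd. discriminate.
Qed.
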